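(* Let $R$ be as in the standing setup and let $I, J$ be nonzero ideals of $R$. Then $v(I+J)=v(I)\cup v(J)$ if and only if $v(I\cap J)=v(I)\cap v(J)$.
   Context: Standing setup: $k$ is a field and $R$ is a complete local domain with $k\subseteq R\subseteq k[[t]]$, residue field $k$, maximal ideal $m$, and nonzero conductor $(R:k[[t]])\neq 0$. Let $v$ denote the $t$-adic valuation on $k[[t]]$. For a nonzero ideal $I$ of $R$, $v(I)=\{v(a): a\in I, a\neq 0\}$. *)

(* Defs.v *)
From HB Require Import structures.
From mathcomp Require Import all_boot all_order all_algebra.
Set Implicit Arguments. Unset Strict Implicit. Unset Printing Implicit Defensive.
Import Order.TTheory GRing.Theory Num.Theory.
Local Open Scope ring_scope.

Section PS.
Variable k : fieldType.

(* k[[t]] : f n is the coefficient of t^n *)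
Definition ps := nat -> k.

Definition ps_const (c : k) : ps := fun n => if n == 0%N then c else 0.
Definition ps0 : ps := ps_const 0.
Definition ps1 : ps := ps_const 1.
Definition ps_add (f g : ps) : ps := fun n => f n + g n.
Definition ps_opp (f : ps) : ps := fun n => - f n.
Definition ps_sub (f g : ps) : ps := ps_add f (ps_opp g).
Definition ps_mul (f g : ps) : ps :=
  fun n => \sum_(i < n.+1) f i * g (n - i)%N.

(* t-adic valuation: ps_ord f n  <->  f <> 0 and v(f) = n *)
Definition ps_ord (f : ps) (n : nat) : Prop :=
  f n <> 0 /\ forall i, (i < n)%N -> f i = 0.

Definition pset := ps -> Prop.

Definition k_subring (R : pset) : Prop :=
  (forall c, R (ps_const c)) /\
  (forall f g, R f -> R g -> R (ps_add f g)) /\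
  (forall f, R f -> R (ps_opp f)) /\
  (forall f g, R f -> R g -> R (ps_mul f g)).

Definition unitR (R : pset) (f : ps) : Prop :=
  R f /\ exists g, R g /\ ps_mul f g = ps1.
Definition maxR (R : pset) : pset := fun f => R f /\ ~ unitR R f.

(* R local: the non-units form an ideal (closure under multiplication
   by R is automatic in a commutative ring) *)
Definition is_local (R : pset) : Prop :=
  forall f g, maxR R f -> maxR R g -> maxR R (ps_add f g).

(* residue field k: k -> R/m is surjective *)
Definition residue_field_k (R : pset) : Prop :=
  forall f, R f -> exists c, maxR R (ps_sub f (ps_const c)).

Inductive mpow (R : pset) : nat -> ps -> Prop :=
| mpow_base f : R f -> mpow R 0 f
| mpow_zero e : mpow R e ps0
| mpow_add e f g : mpow R e f -> mpow R e g -> mpow R e (ps_add f g)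
| mpow_mul e a b : maxR R a -> mpow R e b -> mpow R e.+1 (ps_mul a b).

Definition madic_complete (R : pset) : Prop :=
  forall a : nat -> ps, (forall n, R (a n)) ->
    (forall e, exists N, forall n m, (N <= n)%N -> (N <= m)%N ->
        mpow R e (ps_sub (a n) (a m))) ->
    exists L, R L /\
      (forall e, exists N, forall n, (N <= n)%N -> mpow R e (ps_sub (a n) L)).

(* nonzero conductor (R : k[[t]]) *)
Definition conductor_nonzero (R : pset) : Prop :=
  exists c, c <> ps0 /\ forall y, R (ps_mul c y).

Definition standing_setup (R : pset) : Prop :=
  [/\ k_subring R, is_local R, residue_field_k R, madic_complete R
    & conductor_nonzero R].

Definition is_ideal (R I : pset) : Prop :=
  [/\ forall f, I f -> R f, I ps0,
      forall f g, I f -> I g -> I (ps_add f g)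
    & forall r f, R r -> I f -> I (ps_mul r f)].

Definition nonzero_set (I : pset) : Prop := exists f, I f /\ f <> ps0.

Definition ideal_sum (I J : pset) : pset :=
  fun f => exists a b, I a /\ J b /\ f = ps_add a b.
Definition ideal_cap (I J : pset) : pset := fun f => I f /\ J f.

Definition vset (I : pset) : nat -> Prop :=
  fun n => exists a, I a /\ a <> ps0 /\ ps_ord a n.

End PS.

(* Main.v *)
Require Import Defs.
From mathcomp Require Import all_boot all_order all_algebra.
From Stdlib Require Import FunctionalExtensionality Classical Lia.
Set Implicit Arguments. Unset Strict Implicit. Unset Printing Implicit Defensive.
Import Order.TTheory GRing.Theory Num.Theory.
Local Open Scope ring_scope.

Ltac ssrl := repeat match goal with H : context [subn _ _] |- _ => rewrite -minusE in H | H : context [addn _ _] |- _ => rewrite -plusE in H end; rewrite -?minusE -?plusE; lia.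

Section Aux.
Variable k : fieldType.
Implicit Types f g h y : ps k.

Lemma ps_ext f g : (forall i, f i = g i) -> f = g.
Proof. by move=> H; apply: functional_extensionality. Qed.

Lemma ps_mul_const (c : k) f i : ps_mul (ps_const c) f i = c * f i.
Proof.
rewrite /ps_mul big_ord_recl /= subn0 big1 ?addr0 // => j _.
by rewrite /ps_const /= mul0r.
Qed.

Definition trunc (N : nat) f : {poly k} := \poly_(i < N) f i.

Lemma coefM_eq (P Q P' Q' : {poly k}) i :
  (forall j, (j <= i)%N -> P`_j = P'`_j) ->
  (forall j, (j <= i)%N -> Q`_j = Q'`_j) ->
  (P * Q)`_i = (P' * Q')`_i.
Proof.
move=> HP HQ; rewrite !coefM; apply: eq_bigr => j _.
rewrite HP ?HQ // ?leq_subr //; exact: (ltn_ord j).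
Qed.

Lemma mul_trunc N f g i : (i < N)%N -> (trunc N f * trunc N g)`_i = ps_mul f g i.
Proof.
move=> iN; rewrite coefM /ps_mul; apply: eq_bigr => j _.
rewrite !coef_poly.
have jN : (j < N)%N by apply: leq_ltn_trans iN; exact: (ltn_ord j).
have jN' : (i - j < N)%N by apply: leq_ltn_trans iN; exact: leq_subr.
by rewrite jN jN'.
Qed.

Lemma ps_mulC f g : ps_mul f g = ps_mul g f.
Proof.
apply: ps_ext => i; rewrite -(mul_trunc f g (ltnSn i)) -(mul_trunc g f (ltnSn i)).
by rewrite mulrC.
Qed.

Lemma ps_mulA f g h : ps_mul (ps_mul f g) h = ps_mul f (ps_mul g h).
Proof.
apply: ps_ext => i.
rewrite -(mul_trunc _ h (ltnSn i)) -(mul_trunc f _ (ltnSn i)).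
transitivity (((trunc i.+1 f * trunc i.+1 g) * trunc i.+1 h)`_i).
  apply: coefM_eq => // j ji; rewrite coef_poly ltnS ji mul_trunc //.
rewrite -mulrA; apply: coefM_eq => // j ji; rewrite coef_poly ltnS ji mul_trunc //.
Qed.


Definition low f (m : nat) := forall i, (i < m)%N -> f i = 0.

Lemma mul_low f g s t : low f s -> low g t ->
  low (ps_mul f g) (s + t) /\ ps_mul f g (s + t)%N = f s * g t.
Proof.
move=> Hf Hg; split.
  move=> i it; rewrite /ps_mul big1 // => j _.
  case: (ltnP j s) => js; first by rewrite Hf ?mul0r.
  rewrite Hg ?mulr0 //.
  have ji : (j <= i)%N by rewrite -ltnS.
  move/ssrnat.leP: js => js; move/ssrnat.leP: ji => ji; move/ssrnat.ltP: it => it; apply/ssrnat.ltP; ssrl.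
rewrite /ps_mul.
have hs : (s < (s + t).+1)%N by rewrite ltnS leq_addr.
rewrite (bigD1 (Ordinal hs)) //= big1 ?addr0; first by rewrite addKn.
move=> j /eqP jne.
have jne' : nat_of_ord j <> s by move=> E; apply: jne; apply: val_inj.
case: (ltnP j s) => js; first by rewrite Hf ?mul0r.
rewrite Hg ?mulr0 //.
have ji := ltn_ord j.
move/ssrnat.leP: js => js; move/ssrnat.ltP: ji => ji; apply/ssrnat.ltP; move: jne ji js jne'; clear; move: (nat_of_ord j) => jj *; ssrl.
Qed.

Lemma exists_ord f : f <> ps0 k -> exists n, ps_ord f n.
Proof.
move=> nz.
have ex : exists i, (fun i => f i != 0) i.
  apply: NNPP => H; apply: nz; apply: ps_ext => i.
  rewrite /ps0 /ps_const if_same; apply/eqP; apply: negbNE; apply/negP => Hi.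
  by apply: H; exists i.
exists (ex_minn ex); case: ex_minnP => m /eqP Hm Hmin; split => // i im.
apply/eqP; apply: negbNE; apply/negP => Hi.
by have := Hmin i Hi; rewrite leqNgt im.
Qed.

Section Div.
Variables (g f : ps k) (s : nat).
Hypothesis gs : g s != 0.
Hypothesis lg : low g s.
Hypothesis lf : low f s.

Fixpoint ys (n : nat) : seq k :=
  if n is n'.+1 then
    let sq := ys n' in
    rcons sq ((f (n' + s)%N - \sum_(j < n') sq`_j * g (n' + s - j)%N) / g s)
  else [::].

Lemma size_ys n : size (ys n) = n.
Proof. by elim: n => //= n IH; rewrite size_rcons IH. Qed.

Lemma nth_ys n m j : (j < n)%N -> (n <= m)%N -> (ys m)`_j = (ys n)`_j.
Proof.
move=> jn; elim: m => [|m IH].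
  by rewrite leqn0 => /eqP E; rewrite E in jn.
rewrite leq_eqVlt => /orP [/eqP -> //| ].
rewrite ltnS => nm; rewrite /= nth_rcons size_ys.
have jm : (j < m)%N by apply: leq_trans jn nm.
by rewrite jm IH.
Qed.

Definition ydiv : ps k := fun j => (ys j.+1)`_j.

Lemma ydiv_rec n : ydiv n * g s + \sum_(j < n) ydiv j * g (n + s - j)%N = f (n + s)%N.
Proof.
rewrite /ydiv /= nth_rcons size_ys ltnn eqxx.
have -> : \sum_(j < n) (ys j.+1)`_j * g (n + s - j)%N =
          \sum_(j < n) (ys n)`_j * g (n + s - j)%N.
  apply: eq_bigr => j _; rewrite (nth_ys (n := j.+1)) //; exact: ltn_ord.
by rewrite mulfVK // subrK.
Qed.

Lemma div_ok : ps_mul g ydiv = f.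
Proof.
apply: ps_ext => i; rewrite ps_mulC.
case: (ltnP i s) => iS.
  rewrite lf // /ps_mul big1 // => j _; rewrite lg ?mulr0 //.
  move/ssrnat.ltP: iS => iS; apply/ssrnat.ltP; ssrl.
have -> : i = (i - s + s)%N by rewrite subnK.
set n := (i - s)%N.
rewrite -ydiv_rec /ps_mul.
rewrite -(big_mkord xpredT (fun j => ydiv j * g (n + s - j)%N)).
rewrite -(big_mkord xpredT (fun j => ydiv j * g (n + s - j)%N)).
rewrite (big_cat_nat _ (n := n.+1)) //=; last by rewrite ltnS leq_addr.
rewrite [X in _ + X = _]big1_seq ?addr0.
  by rewrite big_nat_recr //= addKn addrC.
move=> j /andP [_]; rewrite mem_index_iota => /andP [j1 j2].
rewrite lg ?mulr0 //.
move/ssrnat.leP: j1 => j1; move/ssrnat.ltP: j2 => j2; apply/ssrnat.ltP; ssrl.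
Qed.

End Div.


Definition sc (l : k) f := ps_mul (ps_const l) f.

Lemma scE l f i : sc l f i = l * f i.
Proof. exact: ps_mul_const. Qed.

Lemma low_step f m : low f m -> f m = 0 -> low f m.+1.
Proof.
move=> H fm i; rewrite ltnS leq_eqVlt => /orP [/eqP -> //|]; exact: H.
Qed.

Lemma mkv (I : pset k) a n : I a -> ps_ord a n -> vset I n.
Proof.
move=> Ia [an la]; exists a; split => //; split => // E.
by apply: an; rewrite E /ps0 /ps_const if_same.
Qed.

Lemma ideal_sc (R I : pset k) l f : k_subring R -> is_ideal R I -> I f -> I (sc l f).
Proof. by case=> Rc _ [_ _ _ Im] If; apply: Im. Qed.

Lemma ideal_add (R I : pset k) f g : is_ideal R I -> I f -> I g -> I (ps_add f g).
Proof. by case=> _ _ Ia _; apply: Ia. Qed.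

Lemma absorb (R J : pset k) : standing_setup R -> is_ideal R J -> nonzero_set J ->
  exists M, forall f, low f M -> J f.
Proof.
case=> _ _ _ _ [c [cnz cR]] [_ _ _ Jmul] [b0 [Jb0 b0nz]].
have [q [cq lc]] := exists_ord cnz.
have [p [bp lb]] := exists_ord b0nz.
have [lg gqp] := mul_low lc lb.
exists (q + p)%N => f lf.
have gnz : ps_mul c b0 (q + p)%N != 0 by rewrite gqp mulf_neq0 //; apply/eqP.
have E := div_ok gnz lg lf.
rewrite -E; set y := ydiv _ _ _.
have := Jmul _ _ (cR y) Jb0.
by rewrite ps_mulA (ps_mulC y b0) -ps_mulA.
Qed.


Lemma dirA (R I J : pset k) : k_subring R -> is_ideal R I -> is_ideal R J ->
  (forall n, vset (ideal_cap I J) n <-> (vset I n /\ vset J n)) ->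
  (forall n, vset (ideal_sum I J) n <-> (vset I n \/ vset J n)).
Proof.
move=> HR HI HJ Hc n; split; last first.
  case=> [[a [Ia [anz ao]]]|[b [Jb [bnz bo]]]].
    exists a; split => //; exists a, (ps0 k); split => //; split; first by case: HJ.
    by apply: ps_ext => i; rewrite /ps_add /ps0 /ps_const if_same addr0.
  exists b; split => //; exists (ps0 k), b; split; first by case: HI.
    split => //; by apply: ps_ext => i; rewrite /ps_add /ps0 /ps_const if_same add0r.
case=> f [[a [b [Ia [Jb fE]]]] [_ [fn lf]]].
apply: NNPP => Hn.
have nI : ~ vset I n by move=> H; apply: Hn; left.
have nJ : ~ vset J n by move=> H; apply: Hn; right.
suff: forall d m, (m + d = n)%N -> forall a b, I a -> J b -> f = ps_add a b ->
        low a m -> low b m -> False.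
  by move/(_ n 0%N (add0n n) a b Ia Jb fE); apply => i.
elim=> [|d IH] m mdn {Ia Jb fE}a {}b Ia Jb fE la lb.
  rewrite addn0 in mdn; subst m.
  have : f n = a n + b n by rewrite fE.
  case: (eqVneq (a n) 0) => an.
    rewrite an add0r => E; apply: nJ; apply: (mkv Jb); split => //; by rewrite -E.
  by move=> _; apply: nI; apply: (mkv Ia); split => //; apply/eqP.
have mn : (m < n)%N by rewrite -mdn addnS ltnS leq_addr.
have fm : a m + b m = 0 by have := lf m mn; rewrite fE.
case: (eqVneq (a m) 0) => am.
  rewrite am add0r in fm.
  apply: (IH m.+1 _ a b) => //; try exact: low_step; by rewrite addSnnS.
have bm : b m != 0.
  apply/eqP => E; rewrite E addr0 in fm; by rewrite fm eqxx in am.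
have Hv : vset (ideal_cap I J) m.
  by apply/Hc; split; [apply: (mkv Ia)|apply: (mkv Jb)]; split => //; apply/eqP.
case: Hv => c [[Ic Jc] [_ [cm lc]]].
set l := a m / c m.
have H1 : I (ps_add a (sc (- l) c)).
  by apply: (ideal_add HI Ia); apply: ideal_sc HR HI Ic.
have H2 : J (ps_add b (sc l c)).
  by apply: (ideal_add HJ Jb); apply: ideal_sc HR HJ Jc.
have H3 : f = ps_add (ps_add a (sc (- l) c)) (ps_add b (sc l c)).
  by rewrite fE; apply: ps_ext => i; rewrite /ps_add !scE mulNr addrACA addNr addr0.
have H4 : low (ps_add a (sc (- l) c)) m.+1.
  apply: low_step => [i im|]; rewrite /ps_add scE.
    by rewrite la // lc // mulr0 addr0.
  by rewrite /l mulNr divfK ?subrr //; apply/eqP.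
have H5 : low (ps_add b (sc l c)) m.+1.
  apply: low_step => [i im|]; rewrite /ps_add scE.
    by rewrite lb // lc // mulr0 addr0.
  by rewrite /l divfK; [rewrite addrC|apply/eqP].
have mdn' : (m.+1 + d)%N = n by rewrite addSnnS.
exact: (IH m.+1 mdn' _ _ H1 H2 H3 H4 H5).
Qed.


Lemma dirB (R I J : pset k) : k_subring R -> is_ideal R I -> is_ideal R J ->
  (exists M, forall f, low f M -> J f) ->
  (forall n, vset (ideal_sum I J) n <-> (vset I n \/ vset J n)) ->
  (forall n, vset (ideal_cap I J) n <-> (vset I n /\ vset J n)).
Proof.
move=> HR HI HJ [M HM] Hs n; split.
  case=> a [[Ia Ja] [anz ao]]; split; by exists a.
case=> [[a0 [Ia0 [_ [a0n la0]]]] [b0 [Jb0 [_ [b0n lb0]]]]].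
set al := a0 n.
suff: forall d m, (m + d = M)%N -> forall a b, I a -> J b -> low a n -> low b n ->
        a n = al -> b n = al -> low (ps_add a (sc (-1) b)) m ->
        vset (ideal_cap I J) n.
  move/(_ M 0%N (add0n M) a0 (sc (al / b0 n) b0) Ia0); apply => //.
  - exact: ideal_sc HR HJ Jb0.
  - by move=> i ni; rewrite scE (lb0 i ni) mulr0.
  - by rewrite scE divfK //; apply/eqP.
elim=> [|d IH] m mdM a b Ia Jb la lb an bn le.
  rewrite addn0 in mdM; subst m.
  have Je := HM _ le.
  have E : a = ps_add (ps_add a (sc (-1) b)) b.
    by apply: ps_ext => i; rewrite /ps_add scE mulN1r addrNK.
  have Ja : J a by rewrite E; apply: ideal_add HJ Je Jb.
  by apply: (mkv (I := ideal_cap I J) (conj Ia Ja)); split => //; rewrite an.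
set e := ps_add a (sc (-1) b).
have eE i : e i = a i - b i by rewrite /e /ps_add scE mulN1r.
have mdM' : (m.+1 + d)%N = M by rewrite addSnnS.
case: (eqVneq (e m) 0) => em.
  exact: (IH m.+1 mdM' a b Ia Jb la lb an bn (low_step le em)).
have nm : (n < m)%N.
  rewrite ltnNge; apply/negP => mn; move: em; rewrite eE.
  move: mn; rewrite leq_eqVlt => /orP [/eqP ->|mn].
    by rewrite an bn subrr eqxx.
  by rewrite la // lb // subrr eqxx.
have Ie : vset (ideal_sum I J) m.
  apply: (mkv (a := e)); last by split => //; apply/eqP.
  exists a, (sc (-1) b); split => //; split => //; exact: ideal_sc HR HJ Jb.
case/Hs: Ie => [[a1 [Ia1 [_ [a1m la1]]]]|[b1 [Jb1 [_ [b1m lb1]]]]].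
  set l := e m / a1 m.
  have H1 : I (ps_add a (sc (- l) a1)).
    by apply: (ideal_add HI Ia); apply: ideal_sc HR HI Ia1.
  have H2 : low (ps_add a (sc (- l) a1)) n.
    move=> i ni; rewrite /ps_add scE la // la1 ?mulr0 ?addr0 //.
    exact: ltn_trans ni nm.
  have H3 : ps_add a (sc (- l) a1) n = al.
    by rewrite /ps_add scE la1 // mulr0 addr0.
  have H4 : low (ps_add (ps_add a (sc (- l) a1)) (sc (-1) b)) m.+1.
    apply: low_step => [i im|].
      have : e i = 0 := le i im; rewrite eE => /eqP; rewrite subr_eq0 => /eqP ab.
      by rewrite /ps_add !scE la1 // mulr0 addr0 ab mulN1r subrr.
    rewrite /ps_add !scE mulN1r addrAC -(eE m) /l mulNr divfK; [by rewrite subrr | by apply/eqP].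
  exact: (IH m.+1 mdM' _ b H1 Jb H2 lb H3 bn H4).
set l := e m / b1 m.
have H1 : J (ps_add b (sc l b1)).
  by apply: (ideal_add HJ Jb); apply: ideal_sc HR HJ Jb1.
have H2 : low (ps_add b (sc l b1)) n.
  move=> i ni; rewrite /ps_add scE lb // lb1 ?mulr0 ?addr0 //.
  exact: ltn_trans ni nm.
have H3 : ps_add b (sc l b1) n = al.
  by rewrite /ps_add scE lb1 // mulr0 addr0.
have H4 : low (ps_add a (sc (-1) (ps_add b (sc l b1)))) m.+1.
  apply: low_step => [i im|].
    have : e i = 0 := le i im; rewrite eE => /eqP; rewrite subr_eq0 => /eqP ab.
    by rewrite /ps_add !scE lb1 // mulr0 addr0 ab mulN1r subrr.
  rewrite /ps_add !scE mulrDr addrA !mulN1r -(eE m) /l divfK; [by rewrite subrr | by apply/eqP].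
exact: (IH m.+1 mdM' a _ Ia H1 la H2 an H3 H4).
Qed.

End Aux.

Theorem lemma1p1 (k : fieldType) (R I J : pset k) :
  standing_setup R ->
  is_ideal R I -> is_ideal R J -> nonzero_set I -> nonzero_set J ->
  ((forall n, vset (ideal_sum I J) n <-> (vset I n \/ vset J n)) <->
   (forall n, vset (ideal_cap I J) n <-> (vset I n /\ vset J n))).
Proof.
move=> HS HI HJ nI nJ.
have HR : k_subring R by case: HS.
split.
  exact: (dirB HR HI HJ (absorb HS HJ nJ)).
exact: (dirA HR HI HJ).
Qed.
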